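(* Let $T$ be a permutation tableau. Then $\mathrm{inv}(T)=0$ if and only if $T$ is an L-Bell tableau.
   Context: Permutation tableaux. Draw a Ferrers diagram in English convention: rows are left-justified, row lengths weakly decrease from top to bottom, and every column is nonempty. Rows of length zero are allowed. A permutation tableau $T$ is a filling of the cells of such a diagram with 0's and 1's satisfying two conditions: (i) every column contains at least one 1; (ii) no cell containing 0 has both a 1 above it in its column and a 1 to its left in its row. Its length $n$ is the number of rows plus the number of columns. Labels. The southeast boundary path of $n$ unit south/west steps, from the top-right corner to the bottom-left corner, has its steps labeled $1,\ldots,n$ in order. Each row gets the label of its south step (at the right end of the row), and each column the label of its west step. $(i,j)$ denotes the cell in row $i$ and column $j$. Zeros, ones and rows. A 1 is topmost if there is no 1 above it in its column. A 0 is restricted if there is a 1 above it in its column. A rightmost restricted 0 is a restricted 0 with no restricted 0 to its right in its row. A row is unrestricted if it contains no restricted 0; empty rows are unrestricted. L-Bell tableau. A permutation tableau is an L-Bell tableau if every topmost 1 is also the leftmost 1 of its row, i.e. there is no 1 to its left in the same row. Dots. Black dots are placed on the topmost 1's (one per column), each labeled by its column label. White dots are placed on the rightmost restricted 0's (one per restricted row), each labeled by its row label. Alternating paths. An alternating path is a sequence of dots, identified with the sequence of their labels, built as follows. - From a white dot in cell $(i,j)$, the next dot is the black dot of column $j$. - From a black dot in cell $(i,j)$: if row $i$ is unrestricted, the path ends; otherwise the next dot is the white dot of row $i$. - If $k$ is a column label or the label of a restricted row, $P_k$ is the path starting at the dot labeled $k$. - If $r$ is the label of an unrestricted row, $P_r$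 is the empty path. $P_k$ is contained in a path $P$ if $k$ labels a dot of $P$. Empty paths are contained in no path. Order on paths. Let $P_a,P_b$ be two paths, neither contained in the other. Remove their longest common final segment, obtaining $P'_a,P'_b$. The ending position of $P'_a$ is defined as follows: - if $P'_a$ is nonempty, it is the cell of its last dot; - if $P_a$ is the empty path of an unrestricted row $r$, it is a point at the right end of row $r$, strictly to the right of all its cells. $P_a>P_b$ if the ending position of $P'_a$ is in a strictly lower row than that of $P'_b$, or in the same row and strictly to the right. Otherwise $P_a<P_b$. Inversions. An inversion is a pair $(j,k)$ of labels satisfying all of the following: $j$ is a column label; $j<k$; $k$ is not the label of a dot of $P_j$; and $P_j>P_k$. $\mathrm{inv}(T)$ is the number of inversions. *)

(* Defs.v *)
From mathcomp Require Import all_boot.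
Set Implicit Arguments. Unset Strict Implicit. Unset Printing Implicit Defensive.

(* A tableau of length [len] is encoded by its southeast boundary path:
   the steps are labeled 1..len; [isrow k] says step k is a south step
   (so k labels a row), otherwise k labels a column.  Row i is above row i'
   iff i < i'; column j is to the LEFT of column j' iff j > j'.
   [fill i j] is the entry (true = 1, false = 0) of cell (i,j); values
   outside cells are irrelevant. *)
Record tableau := Tableau {
  len : nat;
  isrow : nat -> bool;
  fill : nat -> nat -> bool }.

Section Defs.
Variable T : tableau.

Definition labels := iota 1 (len T).
Definition isRowL (i : nat) := (i \in labels) && isrow T i.
Definition isCol (j : nat) := (j \in labels) && ~~ isrow T j.
Definition cell (i j : nat) := [&& isRowL i, isCol j & i < j].

Definition one_above (i j : nat) :=
  has (fun i' => [&& isRowL i', i' < i & fill T i' j]) labels.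
Definition one_left (i j : nat) :=
  has (fun j' => [&& isCol j', j < j' & fill T i j']) labels.

Definition is_perm_tableau : Prop :=
  (forall j, isCol j -> exists i, cell i j && fill T i j) /\
  (forall i j, cell i j -> ~~ fill T i j -> ~ (one_above i j && one_left i j)).

Definition topmost1 (i j : nat) := [&& cell i j, fill T i j & ~~ one_above i j].

Definition is_LBell : Prop :=
  forall i j, topmost1 i j -> ~~ one_left i j.

Definition restricted0 (i j : nat) := [&& cell i j, ~~ fill T i j & one_above i j].
Definition restrictedRow (i : nat) := isRowL i && has (restricted0 i) labels.

(* row of the black dot (topmost 1) of column j *)
Definition top (j : nat) :=
  nth 0 [seq i <- labels | cell i j && fill T i j] 0.
(* column of the white dot (rightmost restricted 0) of row i:
   rightmost = smallest column label *)
Definition wcol (i : nat) := nth 0 [seq j <- labels | restricted0 i j] 0.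

Definition dotpos (k : nat) : nat * nat :=
  if isCol k then (top k, k) else (k, wcol k).

Definition next (k : nat) : option nat :=
  if isCol k then
    (if restrictedRow (top k) then Some (top k) else None)
  else if restrictedRow k then Some (wcol k) else None.

Fixpoint pathf (fuel k : nat) : seq nat :=
  match fuel with
  | 0 => [::]
  | f.+1 => k :: (match next k with Some k' => pathf f k' | None => [::] end)
  end.

(* alternating path P_k; the fuel 2*len+2 exceeds the maximal length of an
   alternating path (rows strictly decrease along it). *)
Definition P (k : nat) : seq nat :=
  if isCol k || restrictedRow k then pathf (len T).*2.+2 k else [::].

(* P_k contained in path Q (empty paths are contained in no path) *)
Definition contained (k : nat) (Q : seq nat) := (P k != [::]) && (k \in Q).

Fixpoint common_prefix (s t : seq nat) : nat :=
  match s, t with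
  | x :: s', y :: t' => if x == y then (common_prefix s' t').+1 else 0
  | _, _ => 0
  end.

(* P'_a : P_a with the longest common final segment with P_b removed *)
Definition strip (a b : nat) : seq nat :=
  let ra := rev (P a) in let rb := rev (P b) in
  rev (drop (common_prefix ra rb) ra).

(* ending position (row, column key); the point at the right end of an
   unrestricted row r is (r, 0): column key 0 is strictly right of every
   column label (labels are >= 1, smaller label = further right). *)
Definition endpos (a b : nat) : nat * nat :=
  let s := strip a b in
  if s is x :: _ then dotpos (last x s) else (a, 0).

Definition path_gt (a b : nat) : bool :=
  [&& ~~ contained a (P b), ~~ contained b (P a) &
   let: (ra, ca) := endpos a b in let: (rb, cb) := endpos b a in
   (rb < ra) || ((ra == rb) && (ca < cb))].

Definition inversion (j k : nat) : bool :=
  [&& isCol j, j < k, k \in labels, k \notin P j & path_gt j k].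

Definition tab_inv : nat :=
  count (fun p : nat * nat => inversion p.1 p.2) [seq (j, k) | j <- labels, k <- labels].

End Defs.

(* Main.v *)
Require Import Defs.
From mathcomp Require Import all_boot.
From Stdlib Require Import Lia.
Import Defs.
Set Implicit Arguments. Unset Strict Implicit. Unset Printing Implicit Defensive.

Lemma first_filter (p : pred nat) m n x : x \in iota m n -> p x ->
  let f := nth 0 [seq i <- iota m n | p i] 0 in [/\ p f, f \in iota m n & f <= x].
Proof.
elim: n m => [|n IH] m //= Hx px.
rewrite inE in Hx.
case pm: (p m) => /=.
  split => //; first by rewrite inE eqxx.
  case/orP: Hx => [/eqP -> //|]; rewrite mem_iota => /andP[/ltnW] //.
case/orP: Hx => [/eqP Hxm|Hx]; first by rewrite -Hxm px in pm.
have [H1 H2 H3] := IH m.+1 Hx px.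
by split => //; rewrite inE H2 orbT.
Qed.

Lemma labelsP T k : (k \in labels T) = (1 <= k <= len T).
Proof. by rewrite /labels mem_iota addnC addn1 ltnS. Qed.

Lemma cell_lab T i j : cell T i j -> [/\ isRowL T i, isCol T j, i < j, i \in labels T & j \in labels T].
Proof. by case/and3P => H1 H2 H3; move: (H1) (H2) => /andP[? _] /andP[? _]. Qed.

Lemma top_spec T j : (exists i, cell T i j && fill T i j) ->
  [/\ cell T (top T j) j, fill T (top T j) j & forall i, cell T i j -> fill T i j -> top T j <= i].
Proof.
move=> [i /andP[Hc Hf]].
have [_ _ _ Hi _] := cell_lab Hc.
have [/andP[H1 H2] H3 H4] := first_filter (p:=fun i => cell T i j && fill T i j) Hi (introT andP (conj Hc Hf)).
split => // i' Hc' Hf'.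
have [_ _ _ Hi' _] := cell_lab Hc'.
by have [_ _ ] := first_filter (p:=fun i => cell T i j && fill T i j) Hi' (introT andP (conj Hc' Hf')).
Qed.

Lemma top_col T j : is_perm_tableau T -> isCol T j ->
  [/\ cell T (top T j) j, fill T (top T j) j & forall i, cell T i j -> fill T i j -> top T j <= i].
Proof. by move=> [H1 _] Hj; apply: top_spec; apply: H1. Qed.

Lemma wcol_spec T i : restrictedRow T i ->
  restricted0 T i (wcol T i) /\ forall j, restricted0 T i j -> wcol T i <= j.
Proof.
case/andP=> _ /hasP [j Hj Hr].
have [H1 H2 H3] := first_filter (p:=restricted0 T i) Hj Hr.
split => // j' Hr'.
have [_ _ _ _ Hj'] := cell_lab (proj1 (andP Hr')).
by have [_ _] := first_filter (p:=restricted0 T i) Hj' Hr'.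
Qed.


Lemma top_topmost1 T j : is_perm_tableau T -> isCol T j -> topmost1 T (top T j) j.
Proof.
move=> HT Hj; have [Hc Hf Hmin] := top_col HT Hj.
rewrite /topmost1 Hc Hf /=; apply/hasP => [[i' Hi' /and3P[Hr Hlt Hf']]].
have [_ _ Hlt2 _ _] := cell_lab Hc.
have : cell T i' j by rewrite /cell Hr Hj (ltn_trans Hlt Hlt2).
by move/Hmin/(_ Hf'); rewrite leqNgt Hlt.
Qed.

Lemma topmost1_top T i j : is_perm_tableau T -> topmost1 T i j -> i = top T j.
Proof.
move=> HT /and3P[Hc Hf Hna].
have [Hr Hj Hij Hi _] := cell_lab Hc.
have [Hc' Hf' Hmin] := top_col HT Hj.
have Hle := Hmin _ Hc Hf.
case: (ltngtP (top T j) i) Hle => // Hlt _.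
have [Hr' _ _ Hl' _] := cell_lab Hc'.
by move: Hna; have -> : one_above T i j by apply/hasP; exists (top T j) => //; rewrite Hr' Hlt Hf'.
Qed.

Definition good T c := isCol T c && ~~ one_left T (top T c) c.

Lemma one_leftI T i c d : isCol T d -> c < d -> fill T i d -> one_left T i c.
Proof.
move=> Hd Hcd Hf; apply/hasP; exists d; last by rewrite Hd Hcd Hf.
by case/andP: Hd.
Qed.

Lemma white_right T c : is_perm_tableau T -> isCol T c -> restrictedRow T (top T c) ->
  c < wcol T (top T c).
Proof.
move=> HT Hc Hrr; have [Hct Hft _] := top_col HT Hc.
have [/and3P[Hcw Hfw Haw] _] := wcol_spec Hrr.
case: (ltngtP c (wcol T (top T c))) => // H.
  exfalso; apply: (proj2 HT _ _ Hcw Hfw); rewrite Haw /=.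
  exact: one_leftI Hc H Hft.
by rewrite -H Hft in Hfw.
Qed.

Lemma core T c d : is_perm_tableau T -> good T c -> isCol T d -> c < d ->
  (restrictedRow T (top T c) -> d < wcol T (top T c)) -> top T c < top T d.
Proof.
move=> HT /andP[Hc Hgl] Hd Hcd Hw.
have [Hct Hft _] := top_col HT Hc.
have [Hdt Hfd _] := top_col HT Hd.
have [Hrc _ Hlc _ _] := cell_lab Hct.
have [Hrd _ Hld _ _] := cell_lab Hdt.
case: (ltngtP (top T c) (top T d)) => // H.
-
  have Hcell : cell T (top T c) d by rewrite /cell Hrc Hd (ltn_trans Hlc Hcd).
  case Hf: (fill T (top T c) d).
    by rewrite (one_leftI Hd Hcd Hf) in Hgl.
  have Hab : one_above T (top T c) d.
    apply/hasP; exists (top T d); first by case/andP: Hrd.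
    by rewrite Hrd H Hfd.
  have Hr0 : restricted0 T (top T c) d by rewrite /restricted0 Hcell Hf Hab.
  have Hrr : restrictedRow T (top T c).
    by rewrite /restrictedRow Hrc; apply/hasP; exists d => //; case/andP: Hd.
  have [_ Hmin] := wcol_spec Hrr.
  by move: (Hmin _ Hr0); rewrite leqNgt (Hw Hrr).
- by move: Hgl; rewrite H (one_leftI Hd Hcd Hfd).
Qed.


Lemma wcol_col T i : restrictedRow T i -> isCol T (wcol T i) /\ i < wcol T i.
Proof.
by move/wcol_spec => [/and3P[Hc _ _] _]; have [_ ? ? _ _] := cell_lab Hc.
Qed.

Lemma top_wcol_lt T i : is_perm_tableau T -> restrictedRow T i -> top T (wcol T i) < i.
Proof.
move=> HT Hrr; have [/and3P[Hc Hf Ha] _] := wcol_spec Hrr.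
have [Hri Hw Hlt _ _] := cell_lab Hc.
have [_ _ Hmin] := top_col HT Hw.
case/hasP: Ha => i' _ /and3P[Hr' Hlt' Hf'].
have Hc' : cell T i' (wcol T i) by rewrite /cell Hr' Hw (ltn_trans Hlt' Hlt).
exact: leq_ltn_trans (Hmin _ Hc' Hf') Hlt'.
Qed.

Lemma rr_notcol T i : restrictedRow T i -> ~~ isCol T i.
Proof. by case/andP => /andP[_ H] _; rewrite /isCol H andbF. Qed.

Lemma next_some T k k' : next T k = Some k' ->
  (isCol T k /\ k' = top T k /\ restrictedRow T k') \/
  (~~ isCol T k /\ restrictedRow T k /\ k' = wcol T k).
Proof.
rewrite /next; case: ifP => Hk.
  by case: ifP => // Hr [<-]; left.
by case: ifP => // Hr [<-]; right.
Qed.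

Lemma next_rowS T k : ~~ isCol T k -> restrictedRow T k -> next T k = Some (wcol T k).
Proof. by move=> Hk Hr; rewrite /next (negbTE Hk) Hr. Qed.

Lemma next_colE T k : isCol T k ->
  next T k = if restrictedRow T (top T k) then Some (top T k) else None.
Proof. by move=> Hk; rewrite /next Hk. Qed.

Lemma next_some_row T k k' : next T k = Some k' -> ~~ isCol T k' -> restrictedRow T k'.
Proof.
case/next_some => [[_ [-> H]] //|[_ [Hr ->]] Hn].
by rewrite (proj1 (wcol_col Hr)) in Hn.
Qed.

Lemma dotpos_col T k : isCol T k -> dotpos T k = (top T k, k).
Proof. by rewrite /dotpos => ->. Qed.
Lemma dotpos_row T k : ~~ isCol T k -> dotpos T k = (k, wcol T k).
Proof. by rewrite /dotpos => /negbTE ->. Qed.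

Lemma step_mono T k k' : is_perm_tableau T -> next T k = Some k' ->
  (dotpos T k').1 <= (dotpos T k).1 /\ (dotpos T k).2 <= (dotpos T k').2.
Proof.
move=> HT; case/next_some => [[Hk [-> Hr]]|[Hk [Hr ->]]].
  rewrite (dotpos_col Hk) (dotpos_row (rr_notcol Hr)) /=.
  by split => //; apply: ltnW; apply: white_right.
have [Hw _] := wcol_col Hr.
rewrite (dotpos_row Hk) (dotpos_col Hw) /=; split => //.
exact: ltnW (top_wcol_lt HT Hr).
Qed.

Definition meas T k := if isCol T k then (top T k).*2.+1 else k.*2.

Lemma step_meas T k k' : is_perm_tableau T -> next T k = Some k' -> meas T k' < meas T k.
Proof.
move=> HT; case/next_some => [[Hk [-> Hr]]|[Hk [Hr ->]]].
  by rewrite /meas Hk (negbTE (rr_notcol Hr)).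
have [Hw _] := wcol_col Hr.
rewrite /meas Hw (negbTE Hk) -doubleS leq_double.
exact: top_wcol_lt.
Qed.

Fixpoint chain T (s : seq nat) : bool :=
  if s is x :: s' then
    (if s' is y :: _ then (next T x == Some y) && chain T s' else next T x == None)
  else true.

Lemma chain_next T s p : chain T s -> p.+1 < size s -> next T (nth 0 s p) = Some (nth 0 s p.+1).
Proof.
elim: s p => [|x [|y s] IH] //= p.
case/andP=> /eqP Hx Hc; case: p => [|p] //= Hp.
by have := IH p Hc Hp.
Qed.

Lemma chain_last T s p : chain T s -> p.+1 = size s -> next T (nth 0 s p) = None.
Proof.
elim: s p => [|x [|y s] IH] //= p.
  by move=> /eqP H; case: p.
case/andP=> _ Hc; case: p => [|p] //= [Hp].
by apply: IH => //=; rewrite Hp.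
Qed.

Lemma chain_cons T x s : chain T (x :: s) -> chain T s.
Proof. by case: s => [|y s] //= /andP[]. Qed.

Lemma chain_drop T s n : chain T s -> chain T (drop n s).
Proof.
elim: s n => [|x s IH] [|n] //= Hc.
by apply: IH; apply: chain_cons Hc.
Qed.

Lemma chain_uniq T x y s t : chain T (x :: s) -> chain T (y :: t) -> next T x = next T y -> s = t.
Proof.
elim: s x y t => [|a s IH] x y [|b t] //=.
- by move=> /eqP -> /andP[/eqP -> _].
- by move=> /andP[/eqP -> _] /eqP ->.
move=> /andP[/eqP Hx Hs] /andP[/eqP Hy Ht] Hn.
have Hab : a = b by move: Hn; rewrite Hx Hy => [[]].
by subst b; rewrite (IH a a t Hs Ht).
Qed.

Lemma chain_suffix T A B x : chain T A -> chain T B -> x \in A -> x \in B ->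
  drop (index x A) A = drop (index x B) B.
Proof.
move=> HA HB xA xB.
have iA : index x A < size A by rewrite index_mem.
have iB : index x B < size B by rewrite index_mem.
rewrite (drop_nth 0 iA) (drop_nth 0 iB) !nth_index //.
congr (_ :: _); apply: (@chain_uniq T x x) => //.
- by rewrite -{1}(nth_index 0 xA) -(drop_nth 0 iA); apply: chain_drop.
- by rewrite -{1}(nth_index 0 xB) -(drop_nth 0 iB); apply: chain_drop.
Qed.


Lemma chain_mono T s p q : is_perm_tableau T -> chain T s -> p <= q -> q < size s ->
  (dotpos T (nth 0 s q)).1 <= (dotpos T (nth 0 s p)).1 /\
  (dotpos T (nth 0 s p)).2 <= (dotpos T (nth 0 s q)).2.
Proof.
move=> HT Hc; elim: q => [|q IH].
  by rewrite leqn0 => /eqP ->.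
rewrite leq_eqVlt => /orP[/eqP -> //|Hpq] Hq.
have [H1 H2] := IH Hpq (ltnW Hq).
have [H3 H4] := step_mono HT (chain_next Hc Hq).
by split; [apply: leq_trans H3 H1 | apply: leq_trans H2 H4].
Qed.

Lemma chain_closed T A e e' : chain T A -> e \in A -> next T e = Some e' -> e' \in A.
Proof.
move=> Hc He Hn.
have iA : index e A < size A by rewrite index_mem.
case: (ltngtP (index e A).+1 (size A)) => H.
- have := chain_next Hc H; rewrite nth_index // Hn => [[->]].
  exact: mem_nth.
- by rewrite ltnS leqNgt iA in H.
- by have := chain_last Hc H; rewrite nth_index // Hn.
Qed.

Lemma chain_pred T A y : chain T A -> y \in A -> y != nth 0 A 0 ->
  exists2 d, d \in A & next T d = Some y.
Proof.
move=> Hc Hy Hne.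
have iA : index y A < size A by rewrite index_mem.
case Hi: (index y A) => [|p].
  by move: Hne; rewrite -Hi nth_index // eqxx.
exists (nth 0 A p); first by apply: mem_nth; rewrite -Hi ltnW.
by rewrite (chain_next Hc) -?Hi ?nth_index.
Qed.

Lemma chain_rows T A : chain T A -> (~~ isCol T (nth 0 A 0) -> A != [::] -> restrictedRow T (nth 0 A 0)) ->
  forall e, e \in A -> ~~ isCol T e -> restrictedRow T e.
Proof.
move=> Hc Hh e He Hnc.
case: (eqVneq e (nth 0 A 0)) => [Heq|Hne].
  by rewrite Heq; apply: Hh; [rewrite -Heq | apply/eqP => H; rewrite H in He].
have [d _ Hd] := chain_pred Hc He Hne.
exact: next_some_row Hd Hnc.
Qed.

Lemma pathf_chain T f k : is_perm_tableau T -> meas T k < f -> chain T (pathf T f k).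
Proof.
move=> HT; elim: f k => [|f IH] k //= Hm.
case Hn: (next T k) => [k'|] //.
have Hm' := step_meas HT Hn.
have Hf : meas T k' < f by apply: leq_trans Hm' _; rewrite -ltnS.
have := IH k' Hf.
case: f IH Hm Hf => [|f] IH Hm Hf //= ->.
by rewrite eqxx.
Qed.

Lemma P_chain T k : is_perm_tableau T -> chain T (P T k).
Proof.
move=> HT; rewrite /P; case: ifP => // Hk; apply: pathf_chain => //.
rewrite /meas; case: ifP => Hc.
  have [Hct _ _] := top_col HT Hc.
  have [_ _ _ Ht _] := cell_lab Hct.
  by rewrite labelsP in Ht; case/andP: Ht => _ H; rewrite !ltnS leq_double.
have : restrictedRow T k by move: Hk; rewrite Hc.
case/andP => /andP[Hl _] _.
by rewrite labelsP in Hl; case/andP: Hl => _ H; rewrite ltnS leqW // leq_double.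
Qed.

Lemma P_cons T k : isCol T k || restrictedRow T k -> exists t, P T k = k :: t.
Proof.
by move=> Hk; rewrite /P Hk; case: (len T) => [|n] /=; eexists.
Qed.

Lemma P_nil T k : ~~ (isCol T k || restrictedRow T k) -> P T k = [::].
Proof. by rewrite /P => /negbTE ->. Qed.

Lemma P_rows T k e : is_perm_tableau T -> e \in P T k -> ~~ isCol T e -> restrictedRow T e.
Proof.
move=> HT; apply: chain_rows; first exact: P_chain.
case: (boolP (isCol T k || restrictedRow T k)) => Hk.
  have [t ->] := P_cons Hk => /= Hn _.
  by case/orP: Hk => // H; rewrite H in Hn.
by rewrite P_nil.
Qed.


Lemma cover T n : is_perm_tableau T -> forall s, size s <= n -> chain T s ->
  isCol T (nth 0 s 0) -> (forall e, e \in s -> isCol T e -> good T e) ->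
  forall d, isCol T d -> nth 0 s 0 < d -> d \notin s ->
  forall p, p < size s ->
  (forall q, p < q -> q < size s -> isCol T (nth 0 s q) -> d < nth 0 s q) ->
  (dotpos T (nth 0 s p)).1 < top T d.
Proof.
move=> HT; elim: n => [|n IH] [|h t] //= Hsz Hc Hh Hg d Hd Hhd Hds p Hp Hq.
have Hgh : good T h by apply: Hg => //; rewrite inE eqxx.
case: t Hsz Hc Hg Hds Hp Hq => [|w t] Hsz Hc Hg Hds Hp Hq.
  move: Hc; rewrite /= (next_colE Hh); case: ifP => // Hr _.
  case: p Hp Hq => // _ _ /=; rewrite (dotpos_col Hh) /=.
  by apply: core => // H; rewrite H in Hr.
move: (Hc) => /= /andP[/eqP Hn Hc1].
move: Hn; rewrite (next_colE Hh); case: ifP => // Hr [Hw].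
have Hwn : ~~ isCol T w by rewrite -Hw rr_notcol.
case: t Hsz Hc Hc1 Hg Hds Hp Hq => [|c t] Hsz Hc Hc1 Hg Hds Hp Hq.
  by move: Hc1; rewrite /= next_rowS // -Hw.
move: (Hc1) => /= /andP[/eqP Hn Hc'].
have Hrw : restrictedRow T w by rewrite -Hw.
have Hwc : c = wcol T w by move: Hn; rewrite (next_rowS Hwn Hrw) => [[]].
have Hcc : isCol T c by rewrite Hwc; case: (wcol_col Hrw).
case: (ltngtP d c) => Hdc.
-
  have Htd : top T h < top T d.
    apply: core => // _; by rewrite Hw -Hwc.
  have [H1 _] := chain_mono HT (Hc : chain T (h :: w :: c :: t)) (leq0n p) Hp.
  move: H1; rewrite /= (dotpos_col Hh) /= => H1.
  exact: leq_ltn_trans H1 Htd.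
- case: p Hp Hq => [|[|p]] Hp Hq.
  + by have := Hq 2 erefl erefl Hcc; rewrite /= ltnNge ltnW.
  + by have := Hq 2 erefl erefl Hcc; rewrite /= ltnNge ltnW.
  + rewrite /=; apply: (IH (c :: t)) => //.
    * by rewrite -ltnS ltnW.
    * by move=> e He; apply: Hg; rewrite (in_cons h) (in_cons w) He !orbT.
    * by move: Hds; rewrite !inE !negb_or => /and3P[].
    * by move=> q Hpq Hqs; apply: (Hq q.+2).
- by move: Hds; rewrite Hdc !inE eqxx !orbT.
Qed.


Lemma chain_le T A e : is_perm_tableau T -> chain T A -> e \in A ->
  (dotpos T e).1 <= (dotpos T (nth 0 A 0)).1 /\ (dotpos T (nth 0 A 0)).2 <= (dotpos T e).2.
Proof.
move=> HT Hc He.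
have iA : index e A < size A by rewrite index_mem.
by have := chain_mono HT Hc (leq0n _) iA; rewrite nth_index.
Qed.

Lemma chain_idx_next T A x z : chain T A -> x \in A -> next T x = Some z ->
  (index x A).+1 < size A /\ nth 0 A (index x A).+1 = z.
Proof.
move=> Hc Hx Hn.
have iA : index x A < size A by rewrite index_mem.
case: (ltngtP (index x A).+1 (size A)) => H.
- by split => //; have := chain_next Hc H; rewrite nth_index // Hn => [[]].
- by rewrite ltnS leqNgt iA in H.
- by have := chain_last Hc H; rewrite nth_index // Hn.
Qed.

Lemma chain_idx_none T A x : chain T A -> x \in A -> next T x = None ->
  (index x A).+1 = size A.
Proof.
move=> Hc Hx Hn.
have iA : index x A < size A by rewrite index_mem.
case: (ltngtP (index x A).+1 (size A)) => // H.
- by have := chain_next Hc H; rewrite nth_index // Hn.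
- by rewrite ltnS leqNgt iA in H.
Qed.

Lemma main_cmp T A B a x y : is_perm_tableau T ->
  chain T A -> chain T B -> nth 0 A 0 = a -> isCol T a ->
  (forall e, e \in A -> isCol T e -> good T e) ->
  (forall d, d \in B -> isCol T d -> top T a < top T d \/ (a < d /\ good T d)) ->
  (~~ isCol T (nth 0 B 0) -> top T a < nth 0 B 0) ->
  (forall e, e \in B -> ~~ isCol T e -> restrictedRow T e) ->
  x \in A -> x \notin B -> y \in B -> y \notin A -> next T x = next T y ->
  (dotpos T x).1 < (dotpos T y).1.
Proof.
move=> HT HA HB Ha Hac HgA HdB HhB HrB xA xB yB yA Hxy.
have HrA : forall e, e \in A -> ~~ isCol T e -> restrictedRow T e.
  by apply: chain_rows => //; rewrite Ha Hac.
have Hxa : (dotpos T x).1 <= top T a.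
  by have [H _] := chain_le HT HA xA; move: H; rewrite Ha (dotpos_col Hac).
have iA : index x A < size A by rewrite index_mem.
case Hn: (next T x) => [z|].
- case: (boolP (isCol T x)) => Hx.
  + move: (Hn); rewrite (next_colE Hx); case: ifP => // Hrx [Hz].
    case: (boolP (isCol T y)) => Hy; last first.
      move: Hxy; rewrite Hn next_rowS ?HrB // => [[Hzy]].
      by have := rr_notcol Hrx; rewrite Hz Hzy (proj1 (wcol_col (HrB _ yB Hy))).
    move: Hxy; rewrite Hn (next_colE Hy); case: ifP => // _ [Hzy].
    have Hgx := HgA _ xA Hx.
    have Hne : x != y by apply: contraNneq yA => <-.
    case: (HdB _ yB Hy) => [Hlt|[_ Hgy]].
      by move: Hxa; rewrite (dotpos_col Hx) Hz Hzy leqNgt Hlt.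
    exfalso; have [_ Hfy _] := top_col HT Hy; have [_ Hfx _] := top_col HT Hx.
    case: (ltngtP x y) Hne => // H _.
      by move: Hgx => /andP[_]; rewrite (one_leftI Hy H) // Hz Hzy.
    by move: Hgy => /andP[_]; rewrite (one_leftI Hx H) // -Hzy -Hz.
  + have Hrx := HrA _ xA Hx.
    move: (Hn); rewrite (next_rowS Hx Hrx) => [[Hz]].
    case: (boolP (isCol T y)) => Hy.
      move: Hxy; rewrite Hn (next_colE Hy); case: ifP => // Hry [Hzy].
      by have := rr_notcol Hry; rewrite -Hzy -Hz (proj1 (wcol_col Hrx)).
    have Hry := HrB _ yB Hy.
    move: Hxy; rewrite Hn (next_rowS Hy Hry) => [[Hzy]].
    rewrite (dotpos_row Hx) (dotpos_row Hy) /=.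
    move: Hxa; rewrite (dotpos_row Hx) /= => Hxa.
    case: (eqVneq y (nth 0 B 0)) => [Hyh|Hyh].
      by apply: leq_ltn_trans Hxa _; rewrite Hyh; apply: HhB; rewrite -Hyh.
    have [d dB Hd] := chain_pred HB yB Hyh.
    have Hdc : isCol T d.
      apply/negPn/negP => Hdn; case/next_some: (Hd) => [[H _]|[_ [Hrd Hyw]]].
        by rewrite H in Hdn.
      by move: Hy; rewrite Hyw (proj1 (wcol_col Hrd)).
    move: (Hd); rewrite (next_colE Hdc); case: ifP => // Hrd [Hyd].
    have dA : d \notin A by apply: contraNN yA => dA; apply: chain_closed HA dA Hd.
    case: (HdB _ dB Hdc) => [Hlt|[Had Hgd]].
      by apply: leq_ltn_trans Hxa _; rewrite -Hyd.
    have Hdz : d < z by rewrite Hzy -Hyd; apply: white_right.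
    have [Hi1 Hi2] := chain_idx_next HA xA Hn.
    rewrite -Hyd.
    have := cover (n := size A) HT (leqnn _) HA _ HgA Hdc _ dA iA.
    rewrite nth_index // (dotpos_row Hx) /=; apply; rewrite ?Ha //.
    move=> q Hpq Hqs Hqc.
    have [_ H2] := chain_mono HT HA Hpq Hqs.
    move: H2; rewrite Hi2 (dotpos_col Hqc) (dotpos_col (_ : isCol T z)) /=.
      by apply: leq_trans.
    by rewrite -Hz; case: (wcol_col Hrx).
-
  have Hx : isCol T x.
    apply/negPn/negP => Hx; by rewrite (next_rowS Hx (HrA _ xA Hx)) in Hn.
  have Hy : isCol T y.
    apply/negPn/negP => Hy; have := next_rowS Hy (HrB _ yB Hy); by rewrite -Hxy Hn.
  rewrite (dotpos_col Hy) /=.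
  case: (HdB _ yB Hy) => [Hlt|[Hay Hgy]].
    exact: leq_ltn_trans Hxa Hlt.
  have Hi := chain_idx_none HA xA Hn.
  have := cover (n := size A) HT (leqnn _) HA _ HgA Hy _ yA iA.
  rewrite nth_index //; apply; rewrite ?Ha //.
  by move=> q Hpq Hqs; move: (leq_ltn_trans Hpq Hqs); rewrite -Hi ltnn.
Qed.


Lemma cp_take s t : take (common_prefix s t) s = take (common_prefix s t) t.
Proof.
elim: s t => [|x s IH] [|y t] //=; case: eqP => [->|_] //=.
by rewrite IH.
Qed.

Lemma cp_size s t : common_prefix s t <= size s /\ common_prefix s t <= size t.
Proof.
elim: s t => [|x s IH] [|y t] //=; case: eqP => _ //=.
by have [] := IH t.
Qed.

Lemma cp_sym s t : common_prefix s t = common_prefix t s.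
Proof.
elim: s t => [|x s IH] [|y t] //=; case: eqP => [->|H]; first by rewrite eqxx IH.
by case: eqP => // H'; rewrite H' in H.
Qed.

Lemma cp_neq s t : common_prefix s t < size s -> common_prefix s t < size t ->
  nth 0 s (common_prefix s t) != nth 0 t (common_prefix s t).
Proof.
elim: s t => [|x s IH] [|y t] //=; case: eqP => [->|H] //=.
  by apply: IH.
by move=> _ _; apply/eqP.
Qed.

Lemma cp_ge n s t : n <= size s -> n <= size t -> take n s = take n t -> n <= common_prefix s t.
Proof.
elim: s t n => [|x s IH] [|y t] [|n] //=.
by move=> H1 H2 [-> H3]; rewrite eqxx ltnS; apply: IH.
Qed.

Lemma side T A B : chain T A -> chain T B -> A != [::] -> nth 0 A 0 \notin B ->
  let c := common_prefix (rev A) (rev B) in c < size A /\ nth 0 (rev A) c \notin B.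
Proof.
move=> HA HB An aB c.
have [c1 c2] := cp_size (rev A) (rev B); rewrite !size_rev in c1 c2.
have HcA : c < size A.
  rewrite ltn_neqAle c1 andbT; apply/eqP => Hc.
  have := cp_take (rev A) (rev B); rewrite -/c Hc take_oversize ?size_rev // => H.
  have : nth 0 A 0 \in rev A by rewrite mem_rev mem_nth // lt0n size_eq0.
  by rewrite H => /mem_take; rewrite mem_rev => aB'; rewrite aB' in aB.
split => //; apply/negP => xB.
set x := nth 0 (rev A) c in xB.
have xA : x \in A by rewrite -mem_rev mem_nth // size_rev.
have Hd := chain_suffix HA HB xA xB.
set D := drop (index x A) A in Hd.
have eA : rev A = rev D ++ rev (take (index x A) A) by rewrite -rev_cat cat_take_drop.
have eB : rev B = rev D ++ rev (take (index x B) B) by rewrite Hd -rev_cat cat_take_drop.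
have Hix : index x A <= size A - c.+1.
  rewrite /x nth_rev //; apply: index_nth.
  by rewrite ltn_subrL (leq_ltn_trans (leq0n c) HcA).
have HsD : c < size D.
  rewrite /D size_drop.
  move: Hix HcA; move: (index x A) (size A) => i n.
  move=> /leP H1 /leP H2; apply/leP; rewrite -!minusE in H1 *; lia.
have := cp_ge (n := size D) (s := rev A) (t := rev B).
rewrite eA eB !size_cat !size_rev !leq_addr => /(_ isT isT).
rewrite !take_size_cat ?size_rev // => /(_ erefl).
by rewrite -eA -eB -/c leqNgt HsD.
Qed.


Lemma rev_next T A c : chain T A -> c.+1 < size A ->
  next T (nth 0 (rev A) c.+1) = Some (nth 0 (rev A) c).
Proof.
move=> HA Hc; rewrite !nth_rev ?(ltnW Hc) //.
have -> : size A - c.+1 = (size A - c.+2).+1.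
  move: Hc; move: (size A) => n /leP H; rewrite -!minusE; lia.
apply: chain_next HA _.
move: Hc; move: (size A) => n /leP H; apply/leP; rewrite -!minusE; lia.
Qed.

Lemma rev_last T A : chain T A -> 0 < size A -> next T (nth 0 (rev A) 0) = None.
Proof.
move=> HA Hs; rewrite nth_rev //; apply: chain_last HA _.
by rewrite subn1 prednK.
Qed.

Lemma P_head T a : P T a != [::] -> nth 0 (P T a) 0 = a.
Proof.
case: (boolP (isCol T a || restrictedRow T a)) => H.
  by have [t ->] := P_cons H.
by rewrite P_nil.
Qed.

Lemma endpos_eq T a b : let c := common_prefix (rev (P T a)) (rev (P T b)) in
  c < size (P T a) -> endpos T a b = dotpos T (nth 0 (rev (P T a)) c).
Proof.
move=> c Hc; rewrite /endpos /strip -/c (drop_nth 0) ?size_rev // rev_cons.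
by case: (rev _) => [|u l] //=; rewrite last_rcons.
Qed.

Lemma strip_dots T a b : is_perm_tableau T -> P T a != [::] -> P T b != [::] ->
  a \notin P T b -> b \notin P T a ->
  exists x y, endpos T a b = dotpos T x /\ endpos T b a = dotpos T y /\
    x \in P T a /\ x \notin P T b /\ y \in P T b /\ y \notin P T a /\ next T x = next T y.
Proof.
move=> HT Ha Hb aB bA.
have HA := P_chain a HT; have HB := P_chain b HT.
have aB' : nth 0 (P T a) 0 \notin P T b by rewrite P_head.
have bA' : nth 0 (P T b) 0 \notin P T a by rewrite P_head.
have [HcA xB] := side HA HB Ha aB'.
have [HcB yA] := side HB HA Hb bA'.
set c := common_prefix (rev (P T a)) (rev (P T b)) in HcA xB.
rewrite cp_sym -/c in HcB yA.
exists (nth 0 (rev (P T a)) c), (nth 0 (rev (P T b)) c).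
split; first exact: endpos_eq.
split; first by rewrite (endpos_eq (a := b) (b := a)) cp_sym.
split; first by rewrite -mem_rev mem_nth // size_rev.
split => //.
split; first by rewrite -mem_rev mem_nth // size_rev.
split => //.
case Hc: c => [|c'].
  by rewrite !rev_last // (leq_ltn_trans (leq0n c)).
rewrite !rev_next -?Hc //.
have := cp_take (rev (P T a)) (rev (P T b)); rewrite -/c => Ht.
by rewrite -(nth_take 0 (_ : c' < c)) ?Ht ?nth_take // Hc.
Qed.


Lemma P_ne T k : isCol T k || restrictedRow T k -> P T k != [::].
Proof. by move=> H; have [t ->] := P_cons H. Qed.

Lemma col_in_labels T k : isCol T k -> k \in labels T.
Proof. by case/andP. Qed.

Lemma top_lt T j : is_perm_tableau T -> isCol T j -> top T j < j.
Proof. by move=> HT Hj; have [Hc _ _] := top_col HT Hj; case/and3P: Hc. Qed.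

Lemma colsP T j d : is_perm_tableau T -> isCol T j -> d \in P T j -> isCol T d ->
  d = j \/ (restrictedRow T (top T j) /\ wcol T (top T j) <= d).
Proof.
move=> HT Hj.
have HC := P_chain j HT.
have [t Ht] := P_cons (introT orP (or_introl Hj)).
rewrite Ht in HC *.
rewrite inE => /orP[/eqP -> _|Hd Hdc]; first by left.
right; move: HC => /=.
case: t Ht Hd => [|i t] // Ht Hd /andP[/eqP Hn HC].
move: Hn; rewrite (next_colE Hj); case: ifP => // Hr [Hi].
split => //.
have Hin : ~~ isCol T i by rewrite -Hi rr_notcol.
move: HC => /=.
case: t Ht Hd => [|w t] Ht Hd.
  by rewrite next_rowS // -Hi.
move=> /andP[/eqP Hn HC].
have Hri : restrictedRow T i by rewrite -Hi.
move: Hn; rewrite (next_rowS Hin Hri) => [[Hw]].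
move: Hd; rewrite inE => /orP[/eqP Hdi|Hd].
  by move: Hdc; rewrite Hdi -Hi (negbTE (rr_notcol Hr)).
have [_ H] := chain_le HT HC Hd.
have Hwc : isCol T w by rewrite -Hw; case: (wcol_col Hri).
by move: H; rewrite /= (dotpos_col Hwc) (dotpos_col Hdc) /= Hi Hw.
Qed.

Lemma cols_ge T k d : is_perm_tableau T -> isCol T k -> d \in P T k -> isCol T d -> k <= d.
Proof.
move=> HT Hk Hd Hdc.
have [_ H] := chain_le HT (P_chain k HT) Hd.
by move: H; rewrite P_head ?P_ne ?Hk // (dotpos_col Hk) (dotpos_col Hdc).
Qed.

Lemma good_LBell T e : is_perm_tableau T -> is_LBell T -> isCol T e -> good T e.
Proof. by move=> HT HL He; rewrite /good He HL // top_topmost1. Qed.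

Lemma noinv T j k : is_perm_tableau T -> is_LBell T -> ~~ inversion T j k.
Proof.
move=> HT HL; apply/negP => /and5P[Hj Hjk Hk kPj Hgt].
have Hpj := P_ne (introT orP (or_introl Hj)).
have HAj := P_chain j HT.
have Htj := top_lt HT Hj.
case: (boolP (isCol T k || restrictedRow T k)) => Hk'; last first.
  move: Hgt; rewrite /path_gt => /and3P[_ _].
  have Hs0 : 0 < size (P T j) by rewrite lt0n size_eq0.
  have Hc0 : common_prefix (rev (P T j)) (rev (P T k)) = 0.
    by rewrite (P_nil Hk'); case: (rev (P T j)).
  have E1 : endpos T j k = dotpos T (nth 0 (rev (P T j)) 0).
    by have := @endpos_eq T j k; rewrite /= Hc0; apply.
  have E2 : endpos T k j = (k, 0) by rewrite /endpos /strip P_nil.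
  rewrite E1 E2.
  have Hm : nth 0 (rev (P T j)) 0 \in P T j by rewrite -mem_rev mem_nth // size_rev.
  have [H _] := chain_le HT HAj Hm.
  move: H; rewrite P_head // (dotpos_col Hj) /=.
  case: (dotpos T _) => ra ca /= H.
  rewrite ltn0 andbF orbF ltnNge.
  by rewrite (leq_trans H) // ltnW // (ltn_trans Htj).
have Hpk := P_ne Hk'.
move: Hgt; rewrite /path_gt /contained Hpj Hpk /= => /and3P[jPk _].
have [x [y [Ex [Ey [xA [xB [yB [yA Hxy]]]]]]]] := strip_dots HT Hpj Hpk jPk kPj.
rewrite Ex Ey.
have Hlt : (dotpos T x).1 < (dotpos T y).1.
  apply: (main_cmp (A := P T j) (B := P T k) (a := j)) => //.
  - exact: P_chain.
  - exact: P_head.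
  - by move=> e _ He; apply: good_LBell.
  - move=> d dB Hd; right; split; last exact: good_LBell.
    have [_ H] := chain_le HT (P_chain k HT) dB.
    move: H; rewrite P_head // (dotpos_col Hd) /=.
    case: (boolP (isCol T k)) => Hkc.
      by rewrite (dotpos_col Hkc) /=; apply: leq_trans.
    have Hrk : restrictedRow T k by move: Hk'; rewrite (negbTE Hkc).
    rewrite (dotpos_row Hkc) /= => H; apply: leq_trans H.
    exact: ltn_trans Hjk (proj2 (wcol_col Hrk)).
  - by rewrite P_head // => _; apply: ltn_trans Htj Hjk.
  - by move=> e He; apply: P_rows HT He.
case: (dotpos T x) Hlt => ra ca; case: (dotpos T y) => rb cb /= Hlt.
by rewrite ltnNge (ltnW Hlt) /= (ltn_eqF Hlt).
Qed.


Lemma max_viol T n j : len T - j < n -> isCol T j -> one_left T (top T j) j ->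
  exists j0, [/\ isCol T j0, one_left T (top T j0) j0 &
               forall d, isCol T d -> j0 < d -> good T d].
Proof.
elim: n j => [|n IH] j // Hn Hj Hl.
case: (boolP (has (fun d => [&& isCol T d, j < d & one_left T (top T d) d]) (labels T))).
  case/hasP => d Hd /and3P[Hdc Hjd Hdl].
  apply: (IH d) => //.
  have Hdl' : d <= len T by move: Hd; rewrite labelsP => /andP[].
  rewrite -ltnS; apply: leq_trans Hn.
  by rewrite ltnS ltn_sub2l // (leq_trans Hjd Hdl').
move/hasPn => Hno; exists j; split => // d Hd Hjd.
have := Hno d (col_in_labels Hd); rewrite Hd Hjd /= => H.
by rewrite /good Hd H.
Qed.

Lemma viol_inv T j : is_perm_tableau T -> isCol T j -> one_left T (top T j) j ->
  (forall d, isCol T d -> j < d -> good T d) ->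
  exists j', (j' \in labels T) && inversion T j j'.
Proof.
move=> HT Hj Hl Hmax.
have [Hcij Hfij _] := top_col HT Hj.
set i := top T j in Hl Hcij Hfij.
case/hasP: Hl => j' Hj'l /and3P[Hj' Hjj' Hfj'].
exists j'; rewrite Hj'l /inversion Hj Hjj' Hj'l /=.
have [Hri _ Hij _ _] := cell_lab Hcij.
have Hcij' : cell T i j' by rewrite /cell Hri Hj' (ltn_trans Hij Hjj').
have [Hct' Hft' Hmin'] := top_col HT Hj'.
have Hti : top T j' <= i := Hmin' _ Hcij' Hfj'.
have Hwj' : restrictedRow T i -> j' < wcol T i.
  move=> Hr; have [/and3P[Hcw Hfw Haw] _] := wcol_spec Hr.
  case: (ltngtP j' (wcol T i)) => // H.
    exfalso; apply: (proj2 HT _ _ Hcw Hfw); rewrite Haw /=.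
    exact: one_leftI Hj' H Hfj'.
  by rewrite -H Hfj' in Hfw.
have j'Pj : j' \notin P T j.
  apply/negP => H; case: (colsP HT Hj H Hj') => [Heq|[Hr Hle]].
    by rewrite Heq ltnn in Hjj'.
  by move: (leq_trans (Hwj' Hr) Hle); rewrite ltnn.
have jPj' : j \notin P T j'.
  apply/negP => H; have := cols_ge HT Hj' H Hj.
  by rewrite leqNgt Hjj'.
rewrite j'Pj /=.
have Hpj := P_ne (introT orP (or_introl Hj)).
have Hpj' := P_ne (introT orP (or_introl Hj')).
rewrite /path_gt /contained Hpj Hpj' /= jPj' j'Pj /=.
have [x [y [Ex [Ey [xA [xB [yB [yA Hxy]]]]]]]] := strip_dots HT Hpj' Hpj j'Pj jPj'.
rewrite Ex Ey.
case: (ltngtP (top T j') i) Hti => // Hlt _.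
-
  have Hc : (dotpos T x).1 < (dotpos T y).1.
    apply: (main_cmp (A := P T j') (B := P T j) (a := j')) => //.
    + exact: P_chain.
    + exact: P_chain.
    + exact: P_head.
    + move=> e He Hec; apply: Hmax => //.
      exact: leq_trans Hjj' (cols_ge HT Hj' He Hec).
    + move=> d dB Hd; case: (colsP HT Hj dB Hd) => [->|[Hr Hle]]; first by left.
      right; have Hjd : j' < d := leq_trans (Hwj' Hr) Hle.
      by split => //; apply: Hmax => //; apply: ltn_trans Hjd.
    + by rewrite P_head // Hj.
    + by move=> e He; apply: P_rows HT He.
  case: (dotpos T x) Hc => ra ca; case: (dotpos T y) => rb cb /= Hc.
  by rewrite Hc.
-
  have Hn : next T j = next T j' by rewrite !next_colE // Hlt.
  have [s1 E1] := P_cons (introT orP (or_introl Hj)).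
  have [s2 E2] := P_cons (introT orP (or_introl Hj')).
  have C1 : chain T (j :: s1) by rewrite -E1; apply: P_chain.
  have C2 : chain T (j' :: s2) by rewrite -E2; apply: P_chain.
  have Hs : s1 = s2 := chain_uniq C1 C2 Hn.
  have Hx : x = j'.
    move: xA xB; rewrite E1 E2 Hs !inE; case/orP => [/eqP -> //|H]; by rewrite H orbT.
  have Hy : y = j.
    move: yB yA; rewrite E1 E2 Hs !inE; case/orP => [/eqP -> //|H]; by rewrite H orbT.
  rewrite Hx Hy (dotpos_col Hj) (dotpos_col Hj') /= Hlt.
  by rewrite ltnn eqxx Hjj'.
Qed.

Theorem theorem3p4 (T : tableau) :
  is_perm_tableau T -> (tab_inv T = 0 <-> is_LBell T).
Proof.
move=> HT; split.
- move=> H0 i j Ht; apply/negP => Hl.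
  have Hi := topmost1_top HT Ht.
  have Hj : isCol T j by case/and3P: Ht => Hc _ _; case: (cell_lab Hc).
  rewrite Hi in Hl.
  have [j0 [Hj0 Hl0 Hmax]] := max_viol (n := (len T - j).+1) (ltnSn _) Hj Hl.
  have [j' /andP[Hl' Hinv]] := viol_inv HT Hj0 Hl0 Hmax.
  have : has (fun p : nat * nat => inversion T p.1 p.2)
             [seq (j, k) | j <- labels T, k <- labels T].
    apply/hasP; exists (j0, j') => //.
    by apply: allpairs_f => //; apply: col_in_labels.
  by rewrite has_count -/(tab_inv T) H0.
- move=> HL; apply/eqP; rewrite -leqn0 leqNgt -has_count.
  by apply/hasPn => [[j k]] _ /=; apply: noinv.
Qed.
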